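(* Let $k\ge1$ be an integer and for $\mathbf{x}=(x_1,\dots,x_k)$ with $x_i\ge 1$ and $\mathbf{y}=(y_1,\dots,y_k)$ with $y_i\ge 0$, not all zero, define $$G(\mathbf{x},\mathbf{y})=\frac{\sum_{i=1}^k y_i\left(1-\frac{1}{x_i}\right)}{\sum_{i=1}^k y_i\prod_{j=i+1}^k x_j}.$$ Then $\min_{\mathbf{y}}\sup_{\mathbf{x}}G(\mathbf{x},\mathbf{y})=\frac{1}{k}$.
   Context: The empty product (for $i=k$) equals $1$. *)

(* Defs.v *)
(* real numbers. Vectors x = (x_1..x_k) are encoded as
   functions nat -> R, with x_i stored at index i-1 (indices 0..k-1). *)
From Stdlib Require Import Reals.
Open Scope R_scope.

Fixpoint sumR (n : nat) (f : nat -> R) : R :=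
  match n with O => 0 | S m => sumR m f + f m end.

Fixpoint prodR (n : nat) (f : nat -> R) : R :=
  match n with O => 1 | S m => prodR m f * f m end.

(* With 0-based index i (paper's index i+1), prod_{j=i+1}^{k} x_j in
   1-based indexing is the product of x over 0-based indices i+1..k-1. *)
Definition tail_prod (k : nat) (x : nat -> R) (i : nat) : R :=
  prodR (k - S i) (fun m => x (S i + m)%nat).

Definition G (k : nat) (x y : nat -> R) : R :=
  sumR k (fun i => y i * (1 - / x i)) /
  sumR k (fun i => y i * tail_prod k x i).

Definition adm_x (k : nat) (x : nat -> R) : Prop :=
  forall i, (i < k)%nat -> 1 <= x i.

Definition adm_y (k : nat) (y : nat -> R) : Prop :=
  (forall i, (i < k)%nat -> 0 <= y i) /\ (exists i, (i < k)%nat /\ y i <> 0).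

Definition Gvals (k : nat) (y : nat -> R) : R -> Prop :=
  fun g => exists x, adm_x k x /\ g = G k x y.

(* Main.v *)
Require Import Defs.
From Stdlib Require Import Reals Lra Lia.
Open Scope R_scope.

Lemma sumR_ext n f g : (forall i, (i < n)%nat -> f i = g i) -> sumR n f = sumR n g.
Proof. induction n; intros H; simpl; auto. rewrite IHn by (intros; apply H; lia). rewrite H by lia; auto. Qed.

Lemma prodR_ext n f g : (forall i, (i < n)%nat -> f i = g i) -> prodR n f = prodR n g.
Proof. induction n; intros H; simpl; auto. rewrite IHn by (intros; apply H; lia). rewrite H by lia; auto. Qed.

Lemma sumR_le n f g : (forall i, (i < n)%nat -> f i <= g i) -> sumR n f <= sumR n g.
Proof. induction n; intros H; simpl; [lra|]. assert (sumR n f <= sumR n g) by (apply IHn; intros; apply H; lia).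
  assert (f n <= g n) by (apply H; lia). lra. Qed.

Lemma sumR_plus n f g : sumR n (fun i => f i + g i) = sumR n f + sumR n g.
Proof. induction n; simpl; [ring| rewrite IHn; ring]. Qed.
Lemma sumR_minus n f g : sumR n (fun i => f i - g i) = sumR n f - sumR n g.
Proof. induction n; simpl; [ring| rewrite IHn; ring]. Qed.
Lemma sumR_scal n c f : sumR n (fun i => c * f i) = c * sumR n f.
Proof. induction n; simpl; [ring| rewrite IHn; ring]. Qed.

Lemma sumR_nonneg n f : (forall i, (i < n)%nat -> 0 <= f i) -> 0 <= sumR n f.
Proof. intros H. replace 0 with (sumR n (fun _ => 0)). apply sumR_le; auto.
  clear H; induction n; simpl; auto; rewrite IHn; ring. Qed.

Lemma sumR_pos n f : (forall i, (i < n)%nat -> 0 <= f i) -> (exists i, (i < n)%nat /\ 0 < f i) -> 0 < sumR n f.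
Proof. induction n; intros H [j [Hj Hf]]; [lia|]. simpl.
  destruct (Nat.eq_dec j n) as [->|Hne].
  - assert (0 <= sumR n f) by (apply sumR_nonneg; intros; apply H; lia). lra.
  - assert (0 < sumR n f) by (apply IHn; [intros; apply H; lia| exists j; split; [lia|auto]]).
    assert (0 <= f n) by (apply H; lia). lra. Qed.

Lemma prodR_ge1 n f : (forall i, (i < n)%nat -> 1 <= f i) -> 1 <= prodR n f.
Proof. induction n; intros H; simpl; [lra|].
  assert (1 <= prodR n f) by (apply IHn; intros; apply H; lia).
  assert (1 <= f n) by (apply H; lia). nra. Qed.

Lemma prodR_pos n f : (forall i, (i < n)%nat -> 0 < f i) -> 0 < prodR n f.
Proof. induction n; intros H; simpl; [lra|].
  assert (0 < prodR n f) by (apply IHn; intros; apply H; lia).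
  assert (0 < f n) by (apply H; lia). nra. Qed.

Lemma ln_prodR n f : (forall i, (i < n)%nat -> 0 < f i) -> ln (prodR n f) = sumR n (fun i => ln (f i)).
Proof. induction n; intros H; simpl; [apply ln_1|].
  assert (0 < prodR n f) by (apply prodR_pos; intros; apply H; lia).
  assert (0 < f n) by (apply H; lia).
  rewrite ln_mult by auto. rewrite IHn; auto. Qed.

Lemma lnb z : 0 < z -> ln z <= z - 1.
Proof. intros Hz. pose proof (exp_ineq1_le (ln z)). rewrite exp_ln in H; lra. Qed.

Definition Tk (L : nat -> R) k i := sumR (k - S i) (fun m => L (S i + m)%nat).

Lemma sumR_const n c : sumR n (fun _ => c) = INR n * c.
Proof. induction n; simpl sumR; [simpl; ring|]. rewrite IHn, ?S_INR; try ring; destruct n; simpl; ring. Qed.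

Lemma sumT L k : sumR k (Tk L k) = sumR k (fun i => INR i * L i).
Proof. induction k; simpl; auto.
  unfold Tk at 2. rewrite Nat.sub_diag. simpl.
  rewrite (sumR_ext k (Tk L (S k)) (fun i => Tk L k i + L k)).
  - rewrite sumR_plus, IHk, sumR_const. destruct k; simpl; ring.
  - intros i Hi. unfold Tk. replace (S k - S i)%nat with (S (k - S i)) by lia.
    simpl. do 2 f_equal. lia.
Qed.

Lemma sumR_comb n a b c d e : sumR n (fun i => a i + b i - c + d i - e i) =
  sumR n a + sumR n b - sumR n (fun _ => c) + sumR n d - sumR n e.
Proof. induction n; simpl; [ring| rewrite IHn; ring]. Qed.

Lemma sumLn k : sumR k (fun i => (INR i + 1) * ln (INR i + 1) - INR i * ln (INR i)) = INR k * ln (INR k).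
Proof. induction k; simpl sumR; [simpl; ring|]. rewrite IHk, ?S_INR; try ring; destruct k; simpl; ring. Qed.

Lemma key k x : (1 <= k)%nat -> adm_x k x ->
  INR k * sumR k (fun i => (INR i + 1) * (1 - / x i)) <= sumR k (fun i => (INR i + 1) * tail_prod k x i).
Proof.
  intros hk hx.
  assert (Hk : 0 < INR k) by (apply lt_0_INR; lia).
  set (L := fun j => ln (x j)).
  assert (HP : forall i, (i < k)%nat -> ln (tail_prod k x i) = Tk L k i).
  { intros i Hi. unfold tail_prod, Tk. apply ln_prodR. intros m Hm. assert (1 <= x (S i + m)%nat) by (apply hx; lia). lra. }
  rewrite <- sumR_scal.
  rewrite (sumR_ext k _ (fun i => INR k * (INR i + 1) - INR k * (INR i + 1) * / x i)) by (intros; ring).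
  rewrite sumR_minus.
  assert (E : sumR k (fun i => INR k * (INR i + 1)) =
     sumR k (fun i => INR k * ((INR i + 1) + ((INR i + 1) * ln (INR i + 1) - INR i * ln (INR i)) - ln (INR k) + Tk L k i - INR i * L i))).
  { rewrite sumR_scal, sumR_scal. f_equal.
    rewrite sumR_comb, sumLn, sumT, sumR_const. ring. }
  assert (B : sumR k (fun i => INR k * ((INR i + 1) + ((INR i + 1) * ln (INR i + 1) - INR i * ln (INR i)) - ln (INR k) + Tk L k i - INR i * L i))
     <= sumR k (fun i => (INR i + 1) * tail_prod k x i + INR k * (INR i + 1) * / x i)).
  { apply sumR_le. intros i Hi.
    assert (Hx : 1 <= x i) by (apply hx; lia).
    assert (HPp : 1 <= tail_prod k x i) by (apply prodR_ge1; intros; apply hx; lia).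
    assert (Hi1 : 0 < INR i + 1) by (pose proof (pos_INR i); lra).
    assert (A : INR k * (ln (INR i + 1) + Tk L k i - ln (INR k)) <= (INR i + 1) * tail_prod k x i - INR k).
    { rewrite <- HP by auto.
      assert (Hz : 0 < (INR i + 1) * tail_prod k x i * / INR k).
      { apply Rmult_lt_0_compat; [nra| apply Rinv_0_lt_compat; lra]. }
      pose proof (lnb _ Hz) as Hl.
      rewrite ln_mult, ln_mult, ln_Rinv in Hl by (try nra; try lra; apply Rinv_0_lt_compat; lra).
      apply Rmult_le_compat_l with (r := INR k) in Hl; [|lra].
      replace (INR k * ((INR i + 1) * tail_prod k x i * / INR k - 1)) with ((INR i + 1) * tail_prod k x i - INR k) in Hl by (field; lra).
      lra. }
    assert (Bp : INR k * (INR i + INR i * ln (INR i + 1) - INR i * ln (INR i) - INR i * L i) <= INR k * (INR i + 1) * / x i).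
    { destruct i as [|i'].
      - simpl INR. replace (INR k * (0 + 0 * ln (0 + 1) - 0 * ln 0 - 0 * L 0%nat)) with 0 by ring.
        apply Rmult_le_pos; [nra| apply Rlt_le, Rinv_0_lt_compat; lra].
      - set (i := S i') in *.
        assert (Hi0 : 0 < INR i) by (apply lt_0_INR; unfold i; lia).
        assert (Hz : 0 < (INR i + 1) * / INR i * / x i).
        { repeat apply Rmult_lt_0_compat; try apply Rinv_0_lt_compat; lra. }
        pose proof (lnb _ Hz) as Hl.
        rewrite ln_mult, ln_mult, ln_Rinv, ln_Rinv in Hl by (try lra; repeat apply Rmult_lt_0_compat; try apply Rinv_0_lt_compat; lra).
        apply Rmult_le_compat_l with (r := INR k * INR i) in Hl; [|nra].
        replace (INR k * INR i * ((INR i + 1) * / INR i * / x i - 1)) with (INR k * (INR i + 1) * / x i - INR k * INR i) in Hl by (field; lra).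
        unfold L. lra. }
    lra. }
  rewrite sumR_plus in B. lra.
Qed.

Definition xt (t : R) : nat -> R := fun j => match j with O => t | S _ => (INR j + 1) / INR j end.

Lemma prod_xt t i n : prodR n (fun m => xt t (S i + m)%nat) = (INR i + 1 + INR n) / (INR i + 1).
Proof.
  assert (0 < INR i + 1) by (pose proof (pos_INR i); lra).
  induction n; cbn [prodR]. simpl INR. field; lra.
  rewrite IHn. replace (S i + n)%nat with (S (i + n)) by lia. unfold xt.
  rewrite !S_INR, plus_INR. pose proof (pos_INR n). field. lra.
Qed.

Lemma tail_xt t k i : (i < k)%nat -> tail_prod k (xt t) i = INR k / (INR i + 1).
Proof. intros Hi. unfold tail_prod. rewrite prod_xt. f_equal.
  rewrite <- S_INR, <- plus_INR. f_equal. lia. Qed.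

Lemma sum_if k c : (1 <= k)%nat -> sumR k (fun i => match i with O => c | S _ => 0 end) = c.
Proof. induction k; intros H; [lia|]. destruct k; simpl; [ring|]. simpl in IHk. rewrite IHk by lia. ring. Qed.

Lemma G_xt k y t : (1 <= k)%nat -> 0 < t ->
  G k (xt t) y = (sumR k (fun i => y i / (INR i + 1)) - y 0%nat / t) / (INR k * sumR k (fun i => y i / (INR i + 1))).
Proof.
  intros hk ht. unfold G. f_equal.
  - rewrite (sumR_ext k _ (fun i => y i / (INR i + 1) - match i with O => y 0%nat / t | S _ => 0 end)).
    + rewrite sumR_minus, sum_if; auto.
    + intros i Hi. destruct i as [|i']; cbn [xt].
      * simpl INR. field; lra.
      * assert (0 < INR (S i')) by (apply lt_0_INR; lia). field; lra.
  - rewrite <- sumR_scal. apply sumR_ext. intros i Hi. rewrite tail_xt by auto.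
    pose proof (pos_INR i). field; lra.
Qed.

Lemma lower k y : (1 <= k)%nat -> adm_y k y ->
  forall b, is_upper_bound (Gvals k y) b -> 1 / INR k <= b.
Proof.
  intros hk [hy0 [j [Hj Hyj]]] b Hb.
  assert (Hk : 0 < INR k) by (apply lt_0_INR; lia).
  set (Ss := sumR k (fun i => y i / (INR i + 1))).
  assert (HS : 0 < Ss).
  { apply sumR_pos.
    - intros i Hi. pose proof (pos_INR i). apply Rmult_le_pos; [apply hy0; auto| apply Rlt_le, Rinv_0_lt_compat; lra].
    - exists j. split; auto. pose proof (pos_INR j). assert (0 <= y j) by (apply hy0; auto).
      apply Rmult_lt_0_compat; [lra| apply Rinv_0_lt_compat; lra]. }
  assert (Hy0 : 0 <= y 0%nat) by (apply hy0; lia).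
  assert (Hg : forall t, 1 <= t -> 1 / INR k - (y 0%nat / (INR k * Ss)) / t <= b).
  { intros t Ht. replace (1 / INR k - (y 0%nat / (INR k * Ss)) / t) with (G k (xt t) y).
    - apply Hb. exists (xt t). split; auto. intros i Hi. destruct i as [|i']; cbn [xt]; auto.
      assert (0 < INR (S i')) by (apply lt_0_INR; lia).
      apply (Rmult_le_reg_r (INR (S i'))); auto. unfold Rdiv. rewrite Rmult_assoc, Rinv_l by lra. lra.
    - rewrite G_xt by (auto; lra). fold Ss. field. lra. }
  destruct (Rle_or_lt (1 / INR k) b) as [H|H]; auto.
  set (d := 1 / INR k - b). set (c := y 0%nat / (INR k * Ss)).
  assert (Hc : 0 <= c) by (unfold c; apply Rmult_le_pos; auto; apply Rlt_le, Rinv_0_lt_compat; nra).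
  assert (Hd : 0 < d) by (unfold d; lra).
  set (t := c / d + 1).
  assert (Hcd : 0 <= c / d) by (apply Rmult_le_pos; auto; apply Rlt_le, Rinv_0_lt_compat; lra).
  specialize (Hg t ltac:(unfold t; lra)). fold c in Hg.
  assert (c / t < d).
  { apply (Rmult_lt_reg_r t). unfold t; lra.
    replace (c / t * t) with c by (field; unfold t; lra).
    unfold t. replace (d * (c / d + 1)) with (c + d) by (field; lra). lra. }
  unfold d in H0. lra.
Qed.

Theorem theorem4 (k : nat) (hk : (1 <= k)%nat) :
  (exists y, adm_y k y /\ is_lub (Gvals k y) (1 / INR k)) /\
  (forall y, adm_y k y ->
     forall b, is_upper_bound (Gvals k y) b -> 1 / INR k <= b).
Proof.
  split; [|intros; eapply lower; eauto].
  assert (Hk : 0 < INR k) by (apply lt_0_INR; lia).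
  assert (Ha : adm_y k (fun i => INR i + 1)).
  { split. intros i _. pose proof (pos_INR i); lra. exists 0%nat. split. lia. simpl; lra. }
  exists (fun i => INR i + 1). split; auto. split.
  - intros g [x [hx ->]]. unfold G.
    pose proof (key k x hk hx) as Hkey.
    set (N := sumR k (fun i => (INR i + 1) * (1 - / x i))) in *.
    set (D := sumR k (fun i => (INR i + 1) * tail_prod k x i)) in *.
    assert (HD : 0 < D).
    { apply sumR_pos.
      - intros i Hi. pose proof (pos_INR i). assert (1 <= tail_prod k x i) by (apply prodR_ge1; intros; apply hx; lia). nra.
      - exists 0%nat. split. lia. assert (1 <= tail_prod k x 0) by (apply prodR_ge1; intros; apply hx; lia). simpl; lra. }
    apply (Rmult_le_reg_r (INR k * D)). nra.
    replace (N / D * (INR k * D)) with (INR k * N) by (field; lra).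
    replace (1 / INR k * (INR k * D)) with D by (field; lra). auto.
  - intros b Hb. eapply lower; eauto.
Qed.
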